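(* Let $\mathfrak{n}$ be the real $7$-dimensional Lie algebra with basis $e_1,\dots,e_7$ whose nonzero brackets (up to antisymmetry) are $[e_1,e_2]=e_3$, $[e_1,e_3]=e_4$, $[e_1,e_4]=e_6$, $[e_2,e_3]=e_5$, $[e_2,e_5]=-e_7$, $[e_2,e_6]=-e_7$, $[e_3,e_4]=e_7$. Then $\mathfrak{n}$ is an Einstein nilradical.
   Context: A real nilpotent Lie algebra $\mathfrak{n}$ is called an Einstein nilradical if it admits an inner product such that the left-invariant Riemannian metric it defines on the simply connected nilpotent Lie group with Lie algebra $\mathfrak{n}$ is a nilsoliton, i.e. its Ricci operator satisfies $\mathrm{Ric}=c\,\mathrm{Id}+D$ for some $c\in\mathbb{R}$ and some derivation $D$ of $\mathfrak{n}$. Brackets of basis elements not listed are zero. *)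

(* Defs.v *)
(* Real Lie algebras on R^n (row vectors 'rV[R]_n) given by
   structure constants, left-invariant metrics given by an inner product. *)
From HB Require Import structures.
From mathcomp Require Import all_boot all_order all_algebra.
From mathcomp Require Import reals.
Set Implicit Arguments. Unset Strict Implicit. Unset Printing Implicit Defensive.
Import Order.TTheory GRing.Theory Num.Theory.
Local Open Scope ring_scope.

Section MetricLie.
Variable R : realType.

Definition bvec n (i : 'I_n) : 'rV[R]_n := delta_mx 0 i.

Definition lbr n (c : 'I_n -> 'I_n -> 'rV[R]_n) (u v : 'rV[R]_n) : 'rV[R]_n :=
  \sum_(i < n) \sum_(j < n) (u 0 i * v 0 j) *: c i j.

Definition is_lie n (c : 'I_n -> 'I_n -> 'rV[R]_n) : Prop :=
  (forall u, lbr c u u = 0) /\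
  (forall u v w, lbr c u (lbr c v w) + lbr c v (lbr c w u) + lbr c w (lbr c u v) = 0).

Fixpoint itbr n (c : 'I_n -> 'I_n -> 'rV[R]_n) (s : seq 'rV[R]_n) (y : 'rV[R]_n) :=
  if s is x :: s' then lbr c x (itbr c s' y) else y.

Definition is_nilpotent n (c : 'I_n -> 'I_n -> 'rV[R]_n) : Prop :=
  exists k : nat, forall (s : seq 'rV[R]_n) y, size s = k -> itbr c s y = 0.

Definition ip n (G : 'M[R]_n) (u v : 'rV[R]_n) : R := (u *m G *m v^T) 0 0.

Definition posdef n (G : 'M[R]_n) : Prop :=
  G^T = G /\ forall v : 'rV[R]_n, v != 0 -> 0 < ip G v v.

Definition orthonormal_basis n (G B : 'M[R]_n) : Prop := B *m G *m B^T = 1%:M.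

(* matrix of ad X, acting on row vectors from the right: e_i *m adm X = [X,e_i] *)
Definition adm n (c : 'I_n -> 'I_n -> 'rV[R]_n) (X : 'rV[R]_n) : 'M[R]_n :=
  \matrix_(i < n, j < n) (lbr c X (bvec i)) 0 j.

Definition killing n (c : 'I_n -> 'I_n -> 'rV[R]_n) (X Y : 'rV[R]_n) : R :=
  \tr (adm c X *m adm c Y).

(* mean curvature vector H: <H,X> = tr ad X *)
Definition meanH n (G B : 'M[R]_n) (c : 'I_n -> 'I_n -> 'rV[R]_n) : 'rV[R]_n :=
  \sum_(i < n) (\tr (adm c (row i B))) *: row i B.

(* Ricci form of the left-invariant metric (Besse, Einstein Manifolds, 7.38),
   computed in the G-orthonormal basis given by the rows of B:
   ric(X,Y) = -1/2 sum_i <[X,X_i],[Y,X_i]> - 1/2 B(X,Y)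
              + 1/4 sum_{i,j} <[X_i,X_j],X><[X_i,X_j],Y>
              - 1/2 (<[H,X],Y> + <[H,Y],X>). *)
Definition ric n (G B : 'M[R]_n) (c : 'I_n -> 'I_n -> 'rV[R]_n) (X Y : 'rV[R]_n) : R :=
  - (1/2) * (\sum_(i < n) ip G (lbr c X (row i B)) (lbr c Y (row i B)))
  - (1/2) * killing c X Y
  + (1/4) * (\sum_(i < n) \sum_(j < n)
               ip G (lbr c (row i B) (row j B)) X * ip G (lbr c (row i B) (row j B)) Y)
  - (1/2) * (ip G (lbr c (meanH G B c) X) Y + ip G (lbr c (meanH G B c) Y) X).

Definition is_ricci_op n (G B : 'M[R]_n) (c : 'I_n -> 'I_n -> 'rV[R]_n) (Ric : 'M[R]_n) : Prop :=
  forall X Y : 'rV[R]_n, ip G (X *m Ric) Y = ric G B c X Y.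

Definition is_derivation n (c : 'I_n -> 'I_n -> 'rV[R]_n) (D : 'M[R]_n) : Prop :=
  forall u v : 'rV[R]_n, lbr c u v *m D = lbr c (u *m D) v + lbr c u (v *m D).

Definition is_nilsoliton n (G B : 'M[R]_n) (c : 'I_n -> 'I_n -> 'rV[R]_n) : Prop :=
  exists (Ric : 'M[R]_n) (cc : R) (D : 'M[R]_n),
    is_ricci_op G B c Ric /\ is_derivation c D /\ Ric = cc%:M + D.

Definition einstein_nilradical n (c : 'I_n -> 'I_n -> 'rV[R]_n) : Prop :=
  is_lie c /\ is_nilpotent c /\
  exists G B : 'M[R]_n, posdef G /\ orthonormal_basis G B /\ is_nilsoliton G B c.

(* The specific 7-dimensional algebra; index k stands for e_{k+1}. *)
Definition e7 (k : nat) : 'rV[R]_7 := bvec (inord k : 'I_7).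

Definition up7 (i j : nat) : 'rV[R]_7 :=
  match i, j with
  | 0, 1 => e7 2
  | 0, 2 => e7 3
  | 0, 3 => e7 5
  | 1, 2 => e7 4
  | 1, 4 => - e7 6
  | 1, 5 => - e7 6
  | 2, 3 => e7 6
  | _, _ => 0
  end.

Definition n7 (i j : 'I_7) : 'rV[R]_7 :=
  if (i < j)%N then up7 i j else if (j < i)%N then - up7 j i else 0.

End MetricLie.

(* Main.v *)
Require Import Defs.
From HB Require Import structures.
From mathcomp Require Import all_boot all_order all_algebra.
From mathcomp Require Import reals.
From mathcomp Require Import ring lra zify.
From Stdlib Require Import Lia.
Set Implicit Arguments. Unset Strict Implicit. Unset Printing Implicit Defensive.
Import Order.TTheory GRing.Theory Num.Theory.
Local Open Scope ring_scope.

Section Work.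
Variable R : realType.

Definition ent (u : 'rV[R]_7) (k : nat) : R := u 0 (inord k).
Arguments ent : simpl never.

Lemma sum7 (F : 'I_7 -> R) : \sum_(i < 7) F i =
  F (inord 0) + F (inord 1) + F (inord 2) + F (inord 3) + F (inord 4) + F (inord 5) + F (inord 6).
Proof.
rewrite !big_ord_recl big_ord0 addr0 !addrA.
by congr (_ + _ + _ + _ + _ + _ + _); congr F; apply/val_inj; rewrite /= inordK.
Qed.

Lemma ent7 (P : nat -> Prop) : P 0%N -> P 1%N -> P 2%N -> P 3%N -> P 4%N -> P 5%N -> P 6%N ->
  forall m, (m < 7)%N -> P m.
Proof. by move=> ? ? ? ? ? ? ? [|[|[|[|[|[|[|m]]]]]]]. Qed.

Lemma rowP7 (u v : 'rV[R]_7) : (forall m, (m < 7)%N -> ent u m = ent v m) -> u = v.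
Proof.
move=> H; apply/rowP => k; rewrite (_ : k = inord k); last by apply/val_inj; rewrite /= inordK.
by apply: H.
Qed.

Lemma e7E m (k : 'I_7) : (m < 7)%N -> e7 R m 0 k = ((k : nat) == m)%:R.
Proof. move=> Hm; rewrite /e7 /bvec mxE eqxx /=. by rewrite -(inj_eq val_inj) /= inordK. Qed.

Lemma e7NE m (k : 'I_7) : (m < 7)%N -> (- e7 R m) 0 k = - ((k : nat) == m)%:R.
Proof. by move=> Hm; rewrite [LHS]mxE e7E. Qed.

Lemma up7E (a b : nat) (k : 'I_7) : up7 R a b 0 k =
  match a, b with
  | 0, 1 => ((k : nat) == 2)%:R
  | 0, 2 => ((k : nat) == 3)%:R
  | 0, 3 => ((k : nat) == 5)%:R
  | 1, 2 => ((k : nat) == 4)%:R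
  | 1, 4 => - ((k : nat) == 6)%:R
  | 1, 5 => - ((k : nat) == 6)%:R
  | 2, 3 => ((k : nat) == 6)%:R
  | _, _ => 0
  end.
Proof.
case: a => [|[|[|a]]]; case: b => [|[|[|[|[|[|b]]]]]]; by rewrite /up7 ?e7NE ?e7E ?mxE.
Qed.

Definition upc (a b m : nat) : R :=
  match a, b, m with
  | 0, 1, 2 => 1
  | 0, 2, 3 => 1
  | 0, 3, 5 => 1
  | 1, 2, 4 => 1
  | 1, 4, 6 => -1
  | 1, 5, 6 => -1
  | 2, 3, 6 => 1
  | _, _, _ => 0
  end.

Lemma up7c a b m : (m < 7)%N -> up7 R a b 0 (inord m) = upc a b m.
Proof.
move=> Hm; rewrite up7E.
case: a => [|[|[|a]]]; case: b => [|[|[|[|[|[|b]]]]]]; rewrite ?inordK //;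
  case: m Hm => [|[|[|[|[|[|[|m]]]]]]] //= _; rewrite ?inordK //= ?mulr1n ?mulr0n ?oppr0 //.
Qed.

Definition cf (a b m : nat) : R :=
  if (a < b)%N then upc a b m else if (b < a)%N then - upc b a m else 0.

Lemma n7E (i j : 'I_7) m : (m < 7)%N -> n7 R i j 0 (inord m) = cf i j m.
Proof.
move=> Hm; rewrite /n7 /cf; case: ifP => _; first exact: up7c.
case: ifP => _; last by rewrite mxE.
by rewrite [LHS]mxE up7c.
Qed.

Definition brf (u v : 'rV[R]_7) (k : nat) : R :=
  match k with
  | 2 => ent u 0 * ent v 1 - ent u 1 * ent v 0
  | 3 => ent u 0 * ent v 2 - ent u 2 * ent v 0
  | 4 => ent u 1 * ent v 2 - ent u 2 * ent v 1
  | 5 => ent u 0 * ent v 3 - ent u 3 * ent v 0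
  | 6 => - (ent u 1 * ent v 4 - ent u 4 * ent v 1) - (ent u 1 * ent v 5 - ent u 5 * ent v 1)
         + (ent u 2 * ent v 3 - ent u 3 * ent v 2)
  | _ => 0
  end.

Definition br7 u v : 'rV[R]_7 := \row_(k < 7) brf u v k.

Lemma entbr u v m : (m < 7)%N -> ent (br7 u v) m = brf u v m.
Proof. by move=> Hm; rewrite /ent mxE inordK. Qed.

Lemma sc_ent (a : R) (M : 'rV[R]_7) k : (a *: M) 0 k = a * M 0 k.
Proof. by rewrite mxE. Qed.

Lemma lbrE u v : lbr (@n7 R) u v = br7 u v.
Proof.
apply: rowP7 => m Hm; rewrite entbr // /lbr /ent summxE.
under eq_bigr => i _ do (rewrite summxE; under eq_bigr => j _ do rewrite sc_ent n7E //).
rewrite !sum7 !inordK //.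
move: m Hm; apply: ent7; rewrite /cf /= /ent; ring.
Qed.


Lemma entD (u v : 'rV[R]_7) m : ent (u + v) m = ent u m + ent v m.
Proof. by rewrite /ent mxE. Qed.
Lemma entN (u : 'rV[R]_7) m : ent (- u) m = - ent u m.
Proof. by rewrite /ent mxE. Qed.
Lemma ent0 m : ent (0 : 'rV[R]_7) m = 0.
Proof. by rewrite /ent mxE. Qed.
Lemma entZ a (u : 'rV[R]_7) m : ent (a *: u) m = a * ent u m.
Proof. by rewrite /ent mxE. Qed.

Definition mkM (f : nat -> nat -> R) : 'M[R]_7 := \matrix_(i < 7, j < 7) f i j.
Lemma mkME f a b : (a < 7)%N -> (b < 7)%N -> mkM f (inord a) (inord b) = f a b.
Proof. by move=> Ha Hb; rewrite mxE !inordK. Qed.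
Definition mkV (f : nat -> R) : 'rV[R]_7 := \row_(j < 7) f j.
Lemma mkVE f a : (a < 7)%N -> ent (mkV f) a = f a.
Proof. by move=> Ha; rewrite /ent mxE !inordK. Qed.

Lemma entM (u : 'rV[R]_7) (M : 'M[R]_7) m : ent (u *m M) m =
  ent u 0 * M (inord 0) (inord m) + ent u 1 * M (inord 1) (inord m) +
  ent u 2 * M (inord 2) (inord m) + ent u 3 * M (inord 3) (inord m) +
  ent u 4 * M (inord 4) (inord m) + ent u 5 * M (inord 5) (inord m) +
  ent u 6 * M (inord 6) (inord m).
Proof. by rewrite /ent mxE sum7. Qed.

Lemma lie7 : is_lie (@n7 R).
Proof.
split.
  move=> u; rewrite lbrE; apply: rowP7; apply: ent7; rewrite entbr // ent0 /=; ring.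
move=> u v w; rewrite !lbrE; apply: rowP7; apply: ent7;
  rewrite !entD ent0 !entbr //= ?entbr //=; ring.
Qed.

Definition wt (m : nat) : nat := nth 0%N [:: 1; 2; 3; 4; 5; 5; 7]%N m.

Definition Pw (m : nat) (v : 'rV[R]_7) := forall k, (k < 7)%N -> (wt k < m)%N -> ent v k = 0.

Ltac kill H Hw j := rewrite (H j); [ | done | move: Hw; rewrite /wt /=; lia].

Lemma Pw_step m x v : Pw m v -> Pw m.+1 (br7 x v).
Proof.
move=> H k Hk; rewrite entbr //; move: k Hk; apply: ent7 => /= Hw //.
- by kill H Hw 0%N; kill H Hw 1%N; ring.
- by kill H Hw 0%N; kill H Hw 2%N; ring.
- by kill H Hw 1%N; kill H Hw 2%N; ring.
- by kill H Hw 0%N; kill H Hw 3%N; ring.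
- by kill H Hw 1%N; kill H Hw 2%N; kill H Hw 3%N; kill H Hw 4%N; kill H Hw 5%N; ring.
Qed.

Lemma Pw_it s y : Pw (size s).+1 (itbr (@n7 R) s y).
Proof.
elim: s => [|x s IH] /=.
  by move=> k Hk; move: k Hk; apply: ent7.
by rewrite lbrE; apply: Pw_step.
Qed.

Lemma nil7 : is_nilpotent (@n7 R).
Proof.
exists 7%N => s y Hs; apply: rowP7 => m Hm; rewrite ent0.
have := @Pw_it s y; rewrite Hs => /(_ m Hm); apply; move: m Hm {Hs}; apply: ent7.
all: by [].
Qed.

End Work.

Section Work2.
Variable R : realType.

Lemma matP7 (M N : 'M[R]_7) :
  (forall a b, (a < 7)%N -> (b < 7)%N -> M (inord a) (inord b) = N (inord a) (inord b)) -> M = N.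
Proof.
move=> H; apply/matrixP => i j.
rewrite (_ : i = inord i); last by apply/val_inj; rewrite /= inordK.
rewrite (_ : j = inord j); last by apply/val_inj; rewrite /= inordK.
by apply: H.
Qed.

Lemma lbrZl c a (u v : 'rV[R]_7) : lbr c (a *: u) v = a *: lbr c u v.
Proof.
rewrite /lbr scaler_sumr; apply: eq_bigr => i _; rewrite scaler_sumr; apply: eq_bigr => j _.
by rewrite mxE scalerA mulrA.
Qed.

Lemma lbrZr c a (u v : 'rV[R]_7) : lbr c u (a *: v) = a *: lbr c u v.
Proof.
rewrite /lbr scaler_sumr; apply: eq_bigr => i _; rewrite scaler_sumr; apply: eq_bigr => j _.
by rewrite mxE scalerA mulrCA.
Qed.

Lemma lbr0l c (v : 'rV[R]_7) : lbr c 0 v = 0.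
Proof.
rewrite /lbr big1 // => i _; rewrite big1 // => j _; by rewrite mxE !mul0r scale0r.
Qed.

Lemma ipZl (G : 'M[R]_7) a u v : ip G (a *: u) v = a * ip G u v.
Proof. by rewrite /ip -!scalemxAl mxE. Qed.

Lemma ipZr (G : 'M[R]_7) a u v : ip G u (a *: v) = a * ip G u v.
Proof. by rewrite /ip linearZ /= -scalemxAr mxE. Qed.

Lemma ip0l (G : 'M[R]_7) v : ip G 0 v = 0.
Proof. by rewrite /ip !mul0mx mxE. Qed.

Lemma entb a b : (a < 7)%N -> (b < 7)%N -> ent (bvec R (inord a : 'I_7)) b = (a == b)%:R.
Proof.
move=> Ha Hb; rewrite /ent /bvec mxE eqxx /= -(inj_eq val_inj) /= !inordK //.
by rewrite eq_sym.
Qed.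

Lemma admE X a b : (a < 7)%N -> (b < 7)%N ->
  adm (@n7 R) X (inord a) (inord b) = brf X (bvec R (inord a)) b.
Proof. by move=> Ha Hb; rewrite mxE lbrE -entbr. Qed.

Lemma tr_adm X : \tr (adm (@n7 R) X) = 0.
Proof.
rewrite /mxtrace sum7 !admE //= !entb //=; ring.
Qed.

Lemma killing0 X Y : killing (@n7 R) X Y = 0.
Proof.
rewrite /killing /mxtrace sum7 !mxE !sum7 !admE //= !entb //=; ring.
Qed.

End Work2.

Section Work3.
Variable R : realType.

Definition Xs (a : nat) : R :=
  match a with
  | 0 => 13 * 13 * 23 * 41 / 19
  | 1 => 13 * 23 * 41 / (3 * 19)
  | 2 => 13 * 41 / 19
  | 3 => 3
  | 4 => 9 * 19 / (8 * 53)
  | 5 => 2 * 53 / (11 * 23)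
  | _ => 19 / (4 * 11 * 13 * 23)
  end.

Definition mu : R := - (9 * 19) / (4 * 53).

Definition vf (a b : nat) : R :=
  match a, b with
  | 0, 0 => 1 | 1, 1 => 1 | 2, 2 => 1 | 3, 3 => 1
  | 4, 5 => 1 | 5, 4 => 1 | 5, 5 => mu | 6, 6 => 1
  | _, _ => 0
  end.

Definition gf (a b : nat) : R :=
  match a, b with
  | 0, 0 => 19 / (13 * 13 * 23 * 41)
  | 1, 1 => 3 * 19 / (13 * 23 * 41)
  | 2, 2 => 19 / (13 * 41)
  | 3, 3 => 1 / 3
  | 4, 4 => 4
  | 4, 5 => 2
  | 5, 4 => 2
  | 5, 5 => 8 * 53 / (9 * 19)
  | 6, 6 => 4 * 11 * 13 * 23 / 19
  | _, _ => 0
  end.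

Definition Vm := mkM vf.
Definition Gm := mkM gf.
Definition Bm : 'M[R]_7 := \matrix_(i < 7, j < 7) (Num.sqrt (Xs i) * vf i j).

Definition tt : R := 3 * 13 * 13 * 23 * 41 * 41 / (2 * 19 * 19).
Definition cc : R := - (43 * 13 * 13 * 23 * 41 * 41) / (6 * 19 * 19).
Definition Dm := mkM (fun a b => if a == b then tt * (wt a)%:R else 0).
Definition Ricm := mkM (fun a b => if a == b then cc + tt * (wt a)%:R else 0).

Lemma Xs_gt0 (i : 'I_7) : 0 < Xs i.
Proof. case: i => [[|[|[|[|[|[|[|i]]]]]]] Hi] //=; lra. Qed.

Lemma rowB (i : 'I_7) : row i Bm = Num.sqrt (Xs i) *: row i Vm.
Proof. by apply/rowP => j; rewrite !mxE. Qed.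

Lemma meanH0 : meanH Gm Bm (@n7 R) = 0.
Proof. by rewrite /meanH big1 // => i _; rewrite tr_adm scale0r. Qed.

Lemma sqX (i : 'I_7) : Num.sqrt (Xs i) * Num.sqrt (Xs i) = Xs i.
Proof. by rewrite -expr2 sqr_sqrtr // ltW // Xs_gt0. Qed.

Lemma ric_red X Y : ric Gm Bm (@n7 R) X Y =
  - (1/2) * (\sum_(i < 7) Xs i * ip Gm (lbr (@n7 R) X (row i Vm)) (lbr (@n7 R) Y (row i Vm)))
  + (1/4) * (\sum_(i < 7) \sum_(j < 7) Xs i * Xs j *
     (ip Gm (lbr (@n7 R) (row i Vm) (row j Vm)) X * ip Gm (lbr (@n7 R) (row i Vm) (row j Vm)) Y)).
Proof.
rewrite /ric meanH0 killing0 !lbr0l !ip0l.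
have E1 : forall i : 'I_7, ip Gm (lbr (@n7 R) X (row i Bm)) (lbr (@n7 R) Y (row i Bm)) =
   Xs i * ip Gm (lbr (@n7 R) X (row i Vm)) (lbr (@n7 R) Y (row i Vm)).
  by move=> i; rewrite rowB !lbrZr ipZl ipZr mulrA sqX.
have E2 : forall i j : 'I_7,
   ip Gm (lbr (@n7 R) (row i Bm) (row j Bm)) X * ip Gm (lbr (@n7 R) (row i Bm) (row j Bm)) Y =
   Xs i * Xs j * (ip Gm (lbr (@n7 R) (row i Vm) (row j Vm)) X * ip Gm (lbr (@n7 R) (row i Vm) (row j Vm)) Y).
  move=> i j; rewrite !rowB !lbrZl !lbrZr !ipZl.
  rewrite -[in RHS](sqX i) -[in RHS](sqX j); ring.
rewrite !(addr0, mulr0, subr0).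
congr (_ * _ + _ * _).
  by apply: eq_bigr => i _; apply: E1.
by apply: eq_bigr => i _; apply: eq_bigr => j _; apply: E2.
Qed.

Lemma ipE7 (M : 'M[R]_7) u v : ip M u v = ent u 0 * M (inord 0) (inord 0) * ent v 0 + ent u 0 * M (inord 0) (inord 1) * ent v 1 + ent u 0 * M (inord 0) (inord 2) * ent v 2 + ent u 0 * M (inord 0) (inord 3) * ent v 3 + ent u 0 * M (inord 0) (inord 4) * ent v 4 + ent u 0 * M (inord 0) (inord 5) * ent v 5 + ent u 0 * M (inord 0) (inord 6) * ent v 6 + ent u 1 * M (inord 1) (inord 0) * ent v 0 + ent u 1 * M (inord 1) (inord 1) * ent v 1 + ent u 1 * M (inord 1) (inord 2) * ent v 2 + ent u 1 * M (inord 1) (inord 3) * ent v 3 + ent u 1 * M (inord 1) (inord 4) * ent v 4 + ent u 1 * M (inord 1) (inord 5) * ent v 5 + ent u 1 * M (inord 1) (inord 6) * ent v 6 + ent u 2 * M (inord 2) (inord 0) * ent v 0 + ent u 2 * M (inord 2) (inord 1) * ent v 1 + ent u 2 * M (inord 2) (inord 2) * ent v 2 + ent u 2 * M (inord 2) (inord 3) * ent v 3 + ent u 2 * M (inord 2) (inord 4) * ent v 4 + ent u 2 * M (inord 2) (inord 5) * ent v 5 + ent u 2 * M (inord 2) (inord 6) * ent v 6 + ent u 3 * M (inord 3) (inord 0) * ent v 0 + ent u 3 * M (inord 3) (inord 1) * ent v 1 + ent u 3 * M (inord 3) (inord 2) * ent v 2 + ent u 3 * M (inord 3) (inord 3) *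 ent v 3 + ent u 3 * M (inord 3) (inord 4) * ent v 4 + ent u 3 * M (inord 3) (inord 5) * ent v 5 + ent u 3 * M (inord 3) (inord 6) * ent v 6 + ent u 4 * M (inord 4) (inord 0) * ent v 0 + ent u 4 * M (inord 4) (inord 1) * ent v 1 + ent u 4 * M (inord 4) (inord 2) * ent v 2 + ent u 4 * M (inord 4) (inord 3) * ent v 3 + ent u 4 * M (inord 4) (inord 4) * ent v 4 + ent u 4 * M (inord 4) (inord 5) * ent v 5 + ent u 4 * M (inord 4) (inord 6) * ent v 6 + ent u 5 * M (inord 5) (inord 0) * ent v 0 + ent u 5 * M (inord 5) (inord 1) * ent v 1 + ent u 5 * M (inord 5) (inord 2) * ent v 2 + ent u 5 * M (inord 5) (inord 3) * ent v 3 + ent u 5 * M (inord 5) (inord 4) * ent v 4 + ent u 5 * M (inord 5) (inord 5) * ent v 5 + ent u 5 * M (inord 5) (inord 6) * ent v 6 + ent u 6 * M (inord 6) (inord 0) * ent v 0 + ent u 6 * M (inord 6) (inord 1) * ent v 1 + ent u 6 * M (inord 6) (inord 2) * ent v 2 + ent u 6 * M (inord 6) (inord 3) * ent v 3 + ent u 6 * M (inord 6) (inord 4) * ent v 4 + ent u 6 * M (inord 6) (inord 5) * ent v 5 + ent u 6 * M (inord 6) (inord 6) * ent v 6.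
Proof.
rewrite /ip mxE sum7 !mxE !sum7 /ent; ring.
Qed.

Lemma ipG u v : ip Gm u v =
  19 / (13 * 13 * 23 * 41) * ent u 0 * ent v 0 + 3 * 19 / (13 * 23 * 41) * ent u 1 * ent v 1
  + 19 / (13 * 41) * ent u 2 * ent v 2 + 1 / 3 * ent u 3 * ent v 3
  + 4 * ent u 4 * ent v 4 + 2 * ent u 4 * ent v 5 + 2 * ent u 5 * ent v 4
  + 8 * 53 / (9 * 19) * ent u 5 * ent v 5 + 4 * 11 * 13 * 23 / 19 * ent u 6 * ent v 6.
Proof. rewrite ipE7 /Gm !mkME //=; ring. Qed.

Lemma entrow (f : nat -> nat -> R) a b : (a < 7)%N -> (b < 7)%N -> ent (row (inord a) (mkM f)) b = f a b.
Proof. by move=> Ha Hb; rewrite /ent !mxE !inordK. Qed.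

End Work3.


Section Work4.
Variable R : realType.

Lemma A0 X Y : ip (Gm R) (br7 X (row (inord 0) (Vm R))) (br7 Y (row (inord 0) (Vm R))) =
  ((19) / (13 * 41)) * ent X 1 * ent Y 1 + ((1) / (3)) * ent X 2 * ent Y 2 + ((2 ^+ 3 * 53) / (3 ^+ 2 * 19)) * ent X 3 * ent Y 3.
Proof. rewrite ipG !entbr //; cbn [brf]; rewrite !entrow //; cbn [vf]; rewrite /mu; by field. Qed.

Lemma A1 X Y : ip (Gm R) (br7 X (row (inord 1) (Vm R))) (br7 Y (row (inord 1) (Vm R))) =
  ((19) / (13 * 41)) * ent X 0 * ent Y 0 + ((2 ^+ 2)) * ent X 2 * ent Y 2 + ((2 ^+ 2 * 11 * 13 * 23) / (19)) * ent X 4 * ent Y 4 + ((2 ^+ 2 * 11 * 13 * 23) / (19)) * ent X 4 * ent Y 5 + ((2 ^+ 2 * 11 * 13 * 23) / (19)) * ent X 5 * ent Y 4 + ((2 ^+ 2 * 11 * 13 * 23) / (19)) * ent X 5 * ent Y 5.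
Proof. rewrite ipG !entbr //; cbn [brf]; rewrite !entrow //; cbn [vf]; rewrite /mu; by field. Qed.

Lemma A2 X Y : ip (Gm R) (br7 X (row (inord 2) (Vm R))) (br7 Y (row (inord 2) (Vm R))) =
  ((1) / (3)) * ent X 0 * ent Y 0 + ((2 ^+ 2)) * ent X 1 * ent Y 1 + ((2 ^+ 2 * 11 * 13 * 23) / (19)) * ent X 3 * ent Y 3.
Proof. rewrite ipG !entbr //; cbn [brf]; rewrite !entrow //; cbn [vf]; rewrite /mu; by field. Qed.

Lemma A3 X Y : ip (Gm R) (br7 X (row (inord 3) (Vm R))) (br7 Y (row (inord 3) (Vm R))) =
  ((2 ^+ 3 * 53) / (3 ^+ 2 * 19)) * ent X 0 * ent Y 0 + ((2 ^+ 2 * 11 * 13 * 23) / (19)) * ent X 2 * ent Y 2.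
Proof. rewrite ipG !entbr //; cbn [brf]; rewrite !entrow //; cbn [vf]; rewrite /mu; by field. Qed.

Lemma A4 X Y : ip (Gm R) (br7 X (row (inord 4) (Vm R))) (br7 Y (row (inord 4) (Vm R))) =
  ((2 ^+ 2 * 11 * 13 * 23) / (19)) * ent X 1 * ent Y 1.
Proof. rewrite ipG !entbr //; cbn [brf]; rewrite !entrow //; cbn [vf]; rewrite /mu; by field. Qed.

Lemma A5 X Y : ip (Gm R) (br7 X (row (inord 5) (Vm R))) (br7 Y (row (inord 5) (Vm R))) =
  ((11 * 13 * 23 * 41 ^+ 2) / (2 ^+ 2 * 19 * 53 ^+ 2)) * ent X 1 * ent Y 1.
Proof. rewrite ipG !entbr //; cbn [brf]; rewrite !entrow //; cbn [vf]; rewrite /mu; by field. Qed.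

Lemma A6 X Y : ip (Gm R) (br7 X (row (inord 6) (Vm R))) (br7 Y (row (inord 6) (Vm R))) =
  0.
Proof. rewrite ipG !entbr //; cbn [brf]; rewrite !entrow //; cbn [vf]; rewrite /mu; by field. Qed.

Lemma B00 X : ip (Gm R) (br7 (row (inord 0) (Vm R)) (row (inord 0) (Vm R))) X = 0.
Proof. rewrite ipG !entbr //; cbn [brf]; rewrite !entrow //; cbn [vf]; rewrite /mu; by field. Qed.

Lemma B01 X : ip (Gm R) (br7 (row (inord 0) (Vm R)) (row (inord 1) (Vm R))) X = ((19) / (13 * 41)) * ent X 2.
Proof. rewrite ipG !entbr //; cbn [brf]; rewrite !entrow //; cbn [vf]; rewrite /mu; by field. Qed.

Lemma B02 X : ip (Gm R) (br7 (row (inord 0) (Vm R)) (row (inord 2) (Vm R))) X = ((1) / (3)) * ent X 3.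
Proof. rewrite ipG !entbr //; cbn [brf]; rewrite !entrow //; cbn [vf]; rewrite /mu; by field. Qed.

Lemma B03 X : ip (Gm R) (br7 (row (inord 0) (Vm R)) (row (inord 3) (Vm R))) X = ((2)) * ent X 4 + ((2 ^+ 3 * 53) / (3 ^+ 2 * 19)) * ent X 5.
Proof. rewrite ipG !entbr //; cbn [brf]; rewrite !entrow //; cbn [vf]; rewrite /mu; by field. Qed.

Lemma B04 X : ip (Gm R) (br7 (row (inord 0) (Vm R)) (row (inord 4) (Vm R))) X = 0.
Proof. rewrite ipG !entbr //; cbn [brf]; rewrite !entrow //; cbn [vf]; rewrite /mu; by field. Qed.

Lemma B05 X : ip (Gm R) (br7 (row (inord 0) (Vm R)) (row (inord 5) (Vm R))) X = 0.
Proof. rewrite ipG !entbr //; cbn [brf]; rewrite !entrow //; cbn [vf]; rewrite /mu; by field. Qed.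

Lemma B06 X : ip (Gm R) (br7 (row (inord 0) (Vm R)) (row (inord 6) (Vm R))) X = 0.
Proof. rewrite ipG !entbr //; cbn [brf]; rewrite !entrow //; cbn [vf]; rewrite /mu; by field. Qed.

Lemma B10 X : ip (Gm R) (br7 (row (inord 1) (Vm R)) (row (inord 0) (Vm R))) X = (- (19) / (13 * 41)) * ent X 2.
Proof. rewrite ipG !entbr //; cbn [brf]; rewrite !entrow //; cbn [vf]; rewrite /mu; by field. Qed.

Lemma B11 X : ip (Gm R) (br7 (row (inord 1) (Vm R)) (row (inord 1) (Vm R))) X = 0.
Proof. rewrite ipG !entbr //; cbn [brf]; rewrite !entrow //; cbn [vf]; rewrite /mu; by field. Qed.

Lemma B12 X : ip (Gm R) (br7 (row (inord 1) (Vm R)) (row (inord 2) (Vm R))) X = ((2 ^+ 2)) * ent X 4 + ((2)) * ent X 5.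
Proof. rewrite ipG !entbr //; cbn [brf]; rewrite !entrow //; cbn [vf]; rewrite /mu; by field. Qed.

Lemma B13 X : ip (Gm R) (br7 (row (inord 1) (Vm R)) (row (inord 3) (Vm R))) X = 0.
Proof. rewrite ipG !entbr //; cbn [brf]; rewrite !entrow //; cbn [vf]; rewrite /mu; by field. Qed.

Lemma B14 X : ip (Gm R) (br7 (row (inord 1) (Vm R)) (row (inord 4) (Vm R))) X = (- (2 ^+ 2 * 11 * 13 * 23) / (19)) * ent X 6.
Proof. rewrite ipG !entbr //; cbn [brf]; rewrite !entrow //; cbn [vf]; rewrite /mu; by field. Qed.

Lemma B15 X : ip (Gm R) (br7 (row (inord 1) (Vm R)) (row (inord 5) (Vm R))) X = (- (11 * 13 * 23 * 41) / (19 * 53)) * ent X 6.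
Proof. rewrite ipG !entbr //; cbn [brf]; rewrite !entrow //; cbn [vf]; rewrite /mu; by field. Qed.

Lemma B16 X : ip (Gm R) (br7 (row (inord 1) (Vm R)) (row (inord 6) (Vm R))) X = 0.
Proof. rewrite ipG !entbr //; cbn [brf]; rewrite !entrow //; cbn [vf]; rewrite /mu; by field. Qed.

Lemma B20 X : ip (Gm R) (br7 (row (inord 2) (Vm R)) (row (inord 0) (Vm R))) X = (- (1) / (3)) * ent X 3.
Proof. rewrite ipG !entbr //; cbn [brf]; rewrite !entrow //; cbn [vf]; rewrite /mu; by field. Qed.

Lemma B21 X : ip (Gm R) (br7 (row (inord 2) (Vm R)) (row (inord 1) (Vm R))) X = (- (2 ^+ 2)) * ent X 4 + (- (2)) * ent X 5.
Proof. rewrite ipG !entbr //; cbn [brf]; rewrite !entrow //; cbn [vf]; rewrite /mu; by field. Qed.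

Lemma B22 X : ip (Gm R) (br7 (row (inord 2) (Vm R)) (row (inord 2) (Vm R))) X = 0.
Proof. rewrite ipG !entbr //; cbn [brf]; rewrite !entrow //; cbn [vf]; rewrite /mu; by field. Qed.

Lemma B23 X : ip (Gm R) (br7 (row (inord 2) (Vm R)) (row (inord 3) (Vm R))) X = ((2 ^+ 2 * 11 * 13 * 23) / (19)) * ent X 6.
Proof. rewrite ipG !entbr //; cbn [brf]; rewrite !entrow //; cbn [vf]; rewrite /mu; by field. Qed.

Lemma B24 X : ip (Gm R) (br7 (row (inord 2) (Vm R)) (row (inord 4) (Vm R))) X = 0.
Proof. rewrite ipG !entbr //; cbn [brf]; rewrite !entrow //; cbn [vf]; rewrite /mu; by field. Qed.

Lemma B25 X : ip (Gm R) (br7 (row (inord 2) (Vm R)) (row (inord 5) (Vm R))) X = 0.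
Proof. rewrite ipG !entbr //; cbn [brf]; rewrite !entrow //; cbn [vf]; rewrite /mu; by field. Qed.

Lemma B26 X : ip (Gm R) (br7 (row (inord 2) (Vm R)) (row (inord 6) (Vm R))) X = 0.
Proof. rewrite ipG !entbr //; cbn [brf]; rewrite !entrow //; cbn [vf]; rewrite /mu; by field. Qed.

Lemma B30 X : ip (Gm R) (br7 (row (inord 3) (Vm R)) (row (inord 0) (Vm R))) X = (- (2)) * ent X 4 + (- (2 ^+ 3 * 53) / (3 ^+ 2 * 19)) * ent X 5.
Proof. rewrite ipG !entbr //; cbn [brf]; rewrite !entrow //; cbn [vf]; rewrite /mu; by field. Qed.

Lemma B31 X : ip (Gm R) (br7 (row (inord 3) (Vm R)) (row (inord 1) (Vm R))) X = 0.
Proof. rewrite ipG !entbr //; cbn [brf]; rewrite !entrow //; cbn [vf]; rewrite /mu; by field. Qed.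

Lemma B32 X : ip (Gm R) (br7 (row (inord 3) (Vm R)) (row (inord 2) (Vm R))) X = (- (2 ^+ 2 * 11 * 13 * 23) / (19)) * ent X 6.
Proof. rewrite ipG !entbr //; cbn [brf]; rewrite !entrow //; cbn [vf]; rewrite /mu; by field. Qed.

Lemma B33 X : ip (Gm R) (br7 (row (inord 3) (Vm R)) (row (inord 3) (Vm R))) X = 0.
Proof. rewrite ipG !entbr //; cbn [brf]; rewrite !entrow //; cbn [vf]; rewrite /mu; by field. Qed.

Lemma B34 X : ip (Gm R) (br7 (row (inord 3) (Vm R)) (row (inord 4) (Vm R))) X = 0.
Proof. rewrite ipG !entbr //; cbn [brf]; rewrite !entrow //; cbn [vf]; rewrite /mu; by field. Qed.

Lemma B35 X : ip (Gm R) (br7 (row (inord 3) (Vm R)) (row (inord 5) (Vm R))) X = 0.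
Proof. rewrite ipG !entbr //; cbn [brf]; rewrite !entrow //; cbn [vf]; rewrite /mu; by field. Qed.

Lemma B36 X : ip (Gm R) (br7 (row (inord 3) (Vm R)) (row (inord 6) (Vm R))) X = 0.
Proof. rewrite ipG !entbr //; cbn [brf]; rewrite !entrow //; cbn [vf]; rewrite /mu; by field. Qed.

Lemma B40 X : ip (Gm R) (br7 (row (inord 4) (Vm R)) (row (inord 0) (Vm R))) X = 0.
Proof. rewrite ipG !entbr //; cbn [brf]; rewrite !entrow //; cbn [vf]; rewrite /mu; by field. Qed.

Lemma B41 X : ip (Gm R) (br7 (row (inord 4) (Vm R)) (row (inord 1) (Vm R))) X = ((2 ^+ 2 * 11 * 13 * 23) / (19)) * ent X 6.
Proof. rewrite ipG !entbr //; cbn [brf]; rewrite !entrow //; cbn [vf]; rewrite /mu; by field. Qed.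

Lemma B42 X : ip (Gm R) (br7 (row (inord 4) (Vm R)) (row (inord 2) (Vm R))) X = 0.
Proof. rewrite ipG !entbr //; cbn [brf]; rewrite !entrow //; cbn [vf]; rewrite /mu; by field. Qed.

Lemma B43 X : ip (Gm R) (br7 (row (inord 4) (Vm R)) (row (inord 3) (Vm R))) X = 0.
Proof. rewrite ipG !entbr //; cbn [brf]; rewrite !entrow //; cbn [vf]; rewrite /mu; by field. Qed.

Lemma B44 X : ip (Gm R) (br7 (row (inord 4) (Vm R)) (row (inord 4) (Vm R))) X = 0.
Proof. rewrite ipG !entbr //; cbn [brf]; rewrite !entrow //; cbn [vf]; rewrite /mu; by field. Qed.

Lemma B45 X : ip (Gm R) (br7 (row (inord 4) (Vm R)) (row (inord 5) (Vm R))) X = 0.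
Proof. rewrite ipG !entbr //; cbn [brf]; rewrite !entrow //; cbn [vf]; rewrite /mu; by field. Qed.

Lemma B46 X : ip (Gm R) (br7 (row (inord 4) (Vm R)) (row (inord 6) (Vm R))) X = 0.
Proof. rewrite ipG !entbr //; cbn [brf]; rewrite !entrow //; cbn [vf]; rewrite /mu; by field. Qed.

Lemma B50 X : ip (Gm R) (br7 (row (inord 5) (Vm R)) (row (inord 0) (Vm R))) X = 0.
Proof. rewrite ipG !entbr //; cbn [brf]; rewrite !entrow //; cbn [vf]; rewrite /mu; by field. Qed.

Lemma B51 X : ip (Gm R) (br7 (row (inord 5) (Vm R)) (row (inord 1) (Vm R))) X = ((11 * 13 * 23 * 41) / (19 * 53)) * ent X 6.
Proof. rewrite ipG !entbr //; cbn [brf]; rewrite !entrow //; cbn [vf]; rewrite /mu; by field. Qed.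

Lemma B52 X : ip (Gm R) (br7 (row (inord 5) (Vm R)) (row (inord 2) (Vm R))) X = 0.
Proof. rewrite ipG !entbr //; cbn [brf]; rewrite !entrow //; cbn [vf]; rewrite /mu; by field. Qed.

Lemma B53 X : ip (Gm R) (br7 (row (inord 5) (Vm R)) (row (inord 3) (Vm R))) X = 0.
Proof. rewrite ipG !entbr //; cbn [brf]; rewrite !entrow //; cbn [vf]; rewrite /mu; by field. Qed.

Lemma B54 X : ip (Gm R) (br7 (row (inord 5) (Vm R)) (row (inord 4) (Vm R))) X = 0.
Proof. rewrite ipG !entbr //; cbn [brf]; rewrite !entrow //; cbn [vf]; rewrite /mu; by field. Qed.

Lemma B55 X : ip (Gm R) (br7 (row (inord 5) (Vm R)) (row (inord 5) (Vm R))) X = 0.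
Proof. rewrite ipG !entbr //; cbn [brf]; rewrite !entrow //; cbn [vf]; rewrite /mu; by field. Qed.

Lemma B56 X : ip (Gm R) (br7 (row (inord 5) (Vm R)) (row (inord 6) (Vm R))) X = 0.
Proof. rewrite ipG !entbr //; cbn [brf]; rewrite !entrow //; cbn [vf]; rewrite /mu; by field. Qed.

Lemma B60 X : ip (Gm R) (br7 (row (inord 6) (Vm R)) (row (inord 0) (Vm R))) X = 0.
Proof. rewrite ipG !entbr //; cbn [brf]; rewrite !entrow //; cbn [vf]; rewrite /mu; by field. Qed.

Lemma B61 X : ip (Gm R) (br7 (row (inord 6) (Vm R)) (row (inord 1) (Vm R))) X = 0.
Proof. rewrite ipG !entbr //; cbn [brf]; rewrite !entrow //; cbn [vf]; rewrite /mu; by field. Qed.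

Lemma B62 X : ip (Gm R) (br7 (row (inord 6) (Vm R)) (row (inord 2) (Vm R))) X = 0.
Proof. rewrite ipG !entbr //; cbn [brf]; rewrite !entrow //; cbn [vf]; rewrite /mu; by field. Qed.

Lemma B63 X : ip (Gm R) (br7 (row (inord 6) (Vm R)) (row (inord 3) (Vm R))) X = 0.
Proof. rewrite ipG !entbr //; cbn [brf]; rewrite !entrow //; cbn [vf]; rewrite /mu; by field. Qed.

Lemma B64 X : ip (Gm R) (br7 (row (inord 6) (Vm R)) (row (inord 4) (Vm R))) X = 0.
Proof. rewrite ipG !entbr //; cbn [brf]; rewrite !entrow //; cbn [vf]; rewrite /mu; by field. Qed.

Lemma B65 X : ip (Gm R) (br7 (row (inord 6) (Vm R)) (row (inord 5) (Vm R))) X = 0.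
Proof. rewrite ipG !entbr //; cbn [brf]; rewrite !entrow //; cbn [vf]; rewrite /mu; by field. Qed.

Lemma B66 X : ip (Gm R) (br7 (row (inord 6) (Vm R)) (row (inord 6) (Vm R))) X = 0.
Proof. rewrite ipG !entbr //; cbn [brf]; rewrite !entrow //; cbn [vf]; rewrite /mu; by field. Qed.

Lemma SA X Y : \sum_(i < 7) Xs R i * ip (Gm R) (lbr (@n7 R) X (row i (Vm R))) (lbr (@n7 R) Y (row i (Vm R))) =
  ((2 * 17 * 41) / (3 * 19)) * ent X 0 * ent Y 0 + ((5 ^+ 2 * 13 * 41) / (19)) * ent X 1 * ent Y 1 + ((13 * 23 * 1093) / (3 * 19)) * ent X 2 * ent Y 2 + ((2 ^+ 2 * 5 * 13 ^+ 2 * 23 * 41 ^+ 2) / (3 ^+ 2 * 19 ^+ 2)) * ent X 3 * ent Y 3 + ((2 ^+ 2 * 11 * 13 ^+ 2 * 23 ^+ 2 * 41) / (3 * 19 ^+ 2)) * ent X 4 * ent Y 4 + ((2 ^+ 2 * 11 * 13 ^+ 2 * 23 ^+ 2 * 41) / (3 * 19 ^+ 2)) * ent X 4 * ent Y 5 + ((2 ^+ 2 * 11 * 13 ^+ 2 * 23 ^+ 2 * 41) / (3 * 19 ^+ 2)) * ent X 5 * ent Y 4 + ((2 ^+ 2 * 11 * 13 ^+ 2 * 23 ^+ 2 * 41) / (3 * 19 ^+ 2)) * ent X 5 * ent Y 5.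
Proof.
rewrite sum7 !lbrE A0 A1 A2 A3 A4 A5 A6 !inordK //; cbn [Xs]; by field.
Qed.

Lemma SB0 X Y : \sum_(j < 7) Xs R (inord 0 : 'I_7) * Xs R j * (ip (Gm R) (lbr (@n7 R) (row (inord 0) (Vm R)) (row j (Vm R))) X * ip (Gm R) (lbr (@n7 R) (row (inord 0) (Vm R)) (row j (Vm R))) Y) =
  ((13 * 23 ^+ 2) / (3)) * ent X 2 * ent Y 2 + ((13 ^+ 3 * 23 * 41 ^+ 2) / (3 ^+ 2 * 19 ^+ 2)) * ent X 3 * ent Y 3 + ((2 ^+ 2 * 3 * 13 ^+ 2 * 23 * 41) / (19)) * ent X 4 * ent Y 4 + ((2 ^+ 4 * 13 ^+ 2 * 23 * 41 * 53) / (3 * 19 ^+ 2)) * ent X 4 * ent Y 5 + ((2 ^+ 4 * 13 ^+ 2 * 23 * 41 * 53) / (3 * 19 ^+ 2)) * ent X 5 * ent Y 4 + ((2 ^+ 6 * 13 ^+ 2 * 23 * 41 * 53 ^+ 2) / (3 ^+ 3 * 19 ^+ 3)) * ent X 5 * ent Y 5.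
Proof.
rewrite sum7 !lbrE !B00 !B01 !B02 !B03 !B04 !B05 !B06 !inordK //; cbn [Xs]; by field.
Qed.

Lemma SB1 X Y : \sum_(j < 7) Xs R (inord 1 : 'I_7) * Xs R j * (ip (Gm R) (lbr (@n7 R) (row (inord 1) (Vm R)) (row j (Vm R))) X * ip (Gm R) (lbr (@n7 R) (row (inord 1) (Vm R)) (row j (Vm R))) Y) =
  ((13 * 23 ^+ 2) / (3)) * ent X 2 * ent Y 2 + ((2 ^+ 4 * 13 ^+ 2 * 23 * 41 ^+ 2) / (3 * 19 ^+ 2)) * ent X 4 * ent Y 4 + ((2 ^+ 3 * 13 ^+ 2 * 23 * 41 ^+ 2) / (3 * 19 ^+ 2)) * ent X 4 * ent Y 5 + ((2 ^+ 3 * 13 ^+ 2 * 23 * 41 ^+ 2) / (3 * 19 ^+ 2)) * ent X 5 * ent Y 4 + ((2 ^+ 2 * 13 ^+ 2 * 23 * 41 ^+ 2) / (3 * 19 ^+ 2)) * ent X 5 * ent Y 5 + ((2 ^+ 5 * 11 * 13 ^+ 3 * 23 ^+ 2 * 41 * 53) / (3 * 19 ^+ 3)) * ent X 6 * ent Y 6.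
Proof.
rewrite sum7 !lbrE !B10 !B11 !B12 !B13 !B14 !B15 !B16 !inordK //; cbn [Xs]; by field.
Qed.

Lemma SB2 X Y : \sum_(j < 7) Xs R (inord 2 : 'I_7) * Xs R j * (ip (Gm R) (lbr (@n7 R) (row (inord 2) (Vm R)) (row j (Vm R))) X * ip (Gm R) (lbr (@n7 R) (row (inord 2) (Vm R)) (row j (Vm R))) Y) =
  ((13 ^+ 3 * 23 * 41 ^+ 2) / (3 ^+ 2 * 19 ^+ 2)) * ent X 3 * ent Y 3 + ((2 ^+ 4 * 13 ^+ 2 * 23 * 41 ^+ 2) / (3 * 19 ^+ 2)) * ent X 4 * ent Y 4 + ((2 ^+ 3 * 13 ^+ 2 * 23 * 41 ^+ 2) / (3 * 19 ^+ 2)) * ent X 4 * ent Y 5 + ((2 ^+ 3 * 13 ^+ 2 * 23 * 41 ^+ 2) / (3 * 19 ^+ 2)) * ent X 5 * ent Y 4 + ((2 ^+ 2 * 13 ^+ 2 * 23 * 41 ^+ 2) / (3 * 19 ^+ 2)) * ent X 5 * ent Y 5 + ((2 ^+ 4 * 3 * 11 ^+ 2 * 13 ^+ 3 * 23 ^+ 2 * 41) / (19 ^+ 3)) * ent X 6 * ent Y 6.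
Proof.
rewrite sum7 !lbrE !B20 !B21 !B22 !B23 !B24 !B25 !B26 !inordK //; cbn [Xs]; by field.
Qed.

Lemma SB3 X Y : \sum_(j < 7) Xs R (inord 3 : 'I_7) * Xs R j * (ip (Gm R) (lbr (@n7 R) (row (inord 3) (Vm R)) (row j (Vm R))) X * ip (Gm R) (lbr (@n7 R) (row (inord 3) (Vm R)) (row j (Vm R))) Y) =
  ((2 ^+ 2 * 3 * 13 ^+ 2 * 23 * 41) / (19)) * ent X 4 * ent Y 4 + ((2 ^+ 4 * 13 ^+ 2 * 23 * 41 * 53) / (3 * 19 ^+ 2)) * ent X 4 * ent Y 5 + ((2 ^+ 4 * 13 ^+ 2 * 23 * 41 * 53) / (3 * 19 ^+ 2)) * ent X 5 * ent Y 4 + ((2 ^+ 6 * 13 ^+ 2 * 23 * 41 * 53 ^+ 2) / (3 ^+ 3 * 19 ^+ 3)) * ent X 5 * ent Y 5 + ((2 ^+ 4 * 3 * 11 ^+ 2 * 13 ^+ 3 * 23 ^+ 2 * 41) / (19 ^+ 3)) * ent X 6 * ent Y 6.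
Proof.
rewrite sum7 !lbrE !B30 !B31 !B32 !B33 !B34 !B35 !B36 !inordK //; cbn [Xs]; by field.
Qed.

Lemma SB4 X Y : \sum_(j < 7) Xs R (inord 4 : 'I_7) * Xs R j * (ip (Gm R) (lbr (@n7 R) (row (inord 4) (Vm R)) (row j (Vm R))) X * ip (Gm R) (lbr (@n7 R) (row (inord 4) (Vm R)) (row j (Vm R))) Y) =
  ((2 * 3 * 11 ^+ 2 * 13 ^+ 3 * 23 ^+ 3 * 41) / (19 ^+ 2 * 53)) * ent X 6 * ent Y 6.
Proof.
rewrite sum7 !lbrE !B40 !B41 !B42 !B43 !B44 !B45 !B46 !inordK //; cbn [Xs]; by field.
Qed.

Lemma SB5 X Y : \sum_(j < 7) Xs R (inord 5 : 'I_7) * Xs R j * (ip (Gm R) (lbr (@n7 R) (row (inord 5) (Vm R)) (row j (Vm R))) X * ip (Gm R) (lbr (@n7 R) (row (inord 5) (Vm R)) (row j (Vm R))) Y) =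
  ((2 * 11 * 13 ^+ 3 * 23 ^+ 2 * 41 ^+ 3) / (3 * 19 ^+ 3 * 53)) * ent X 6 * ent Y 6.
Proof.
rewrite sum7 !lbrE !B50 !B51 !B52 !B53 !B54 !B55 !B56 !inordK //; cbn [Xs]; by field.
Qed.

Lemma SB6 X Y : \sum_(j < 7) Xs R (inord 6 : 'I_7) * Xs R j * (ip (Gm R) (lbr (@n7 R) (row (inord 6) (Vm R)) (row j (Vm R))) X * ip (Gm R) (lbr (@n7 R) (row (inord 6) (Vm R)) (row j (Vm R))) Y) =
  0.
Proof.
rewrite sum7 !lbrE !B60 !B61 !B62 !B63 !B64 !B65 !B66 !inordK //; cbn [Xs]; by field.
Qed.

End Work4.

Section Work5.
Variable R : realType.

Lemma entRic X k : (k < 7)%N -> ent (X *m Ricm R) k = (cc R + tt R * (wt k)%:R) * ent X k.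
Proof.
move=> Hk; rewrite entM /Ricm !mkME //; move: k Hk; apply: ent7; cbn; ring.
Qed.

Lemma ricci7 : is_ricci_op (Gm R) (Bm R) (@n7 R) (Ricm R).
Proof.
move=> X Y; rewrite ric_red SA sum7 SB0 SB1 SB2 SB3 SB4 SB5 SB6.
rewrite ipG !entRic //; cbn [wt nth]; rewrite /cc /tt; by field.
Qed.

Lemma entDm X k : (k < 7)%N -> ent (X *m Dm R) k = tt R * (wt k)%:R * ent X k.
Proof.
move=> Hk; rewrite entM /Dm !mkME //; move: k Hk; apply: ent7; cbn; ring.
Qed.

Lemma deriv7 : is_derivation (@n7 R) (Dm R).
Proof.
move=> u v; rewrite !lbrE; apply: rowP7 => m Hm.
rewrite entDm // entD !entbr //; move: m Hm; apply: ent7; cbn [brf]; rewrite ?entDm //; cbn [wt nth]; ring.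
Qed.

Lemma RicE : Ricm R = (cc R)%:M + Dm R.
Proof.
apply: matP7 => a b Ha Hb; rewrite !mxE !inordK // -(inj_eq val_inj) /= !inordK //.
by case: eqP => _; rewrite ?mulr1n ?mulr0n ?addr0 ?add0r.
Qed.

End Work5.

Section Work6.
Variable R : realType.

Lemma Gsym : (Gm R)^T = Gm R.
Proof.
apply: matP7 => a b Ha Hb; rewrite mxE /Gm !mkME //.
by move: a Ha; apply: ent7; move: b Hb; apply: ent7.
Qed.

Lemma Gpos (v : 'rV[R]_7) : v != 0 -> 0 < ip (Gm R) v v.
Proof.
move=> Hv; rewrite ipG.
set x0 := ent v 0; set x1 := ent v 1; set x2 := ent v 2; set x3 := ent v 3.
set x4 := ent v 4; set x5 := ent v 5; set x6 := ent v 6.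
rewrite ltNge; apply/negP => Hle.
have h0 := sqr_ge0 x0; have h1 := sqr_ge0 x1; have h2 := sqr_ge0 x2; have h3 := sqr_ge0 x3.
have h5 := sqr_ge0 x5; have h6 := sqr_ge0 x6; have h45 := sqr_ge0 (2 * x4 + x5).
have z0 : x0 ^+ 2 = 0 by nra.
have z1 : x1 ^+ 2 = 0 by nra.
have z2 : x2 ^+ 2 = 0 by nra.
have z3 : x3 ^+ 2 = 0 by nra.
have z5 : x5 ^+ 2 = 0 by nra.
have z6 : x6 ^+ 2 = 0 by nra.
have z45 : (2 * x4 + x5) ^+ 2 = 0 by nra.
have e0 : x0 = 0 by apply/eqP; rewrite -sqrf_eq0 z0.
have e1 : x1 = 0 by apply/eqP; rewrite -sqrf_eq0 z1.
have e2 : x2 = 0 by apply/eqP; rewrite -sqrf_eq0 z2.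
have e3 : x3 = 0 by apply/eqP; rewrite -sqrf_eq0 z3.
have e5 : x5 = 0 by apply/eqP; rewrite -sqrf_eq0 z5.
have e6 : x6 = 0 by apply/eqP; rewrite -sqrf_eq0 z6.
have e45 : 2 * x4 + x5 = 0 by apply/eqP; rewrite -sqrf_eq0 z45.
have e4 : x4 = 0 by lra.
move/eqP: Hv; apply; apply: rowP7; apply: ent7; rewrite ent0;
  [exact: e0 | exact: e1 | exact: e2 | exact: e3 | exact: e4 | exact: e5 | exact: e6].
Qed.

Lemma VGV : Vm R *m Gm R *m (Vm R)^T = diag_mx (\row_i (Xs R i)^-1).
Proof.
apply: matP7 => a b Ha Hb.
rewrite [LHS]mxE sum7 !mxE !sum7 !mxE !inordK //.
rewrite -(inj_eq val_inj) /= !inordK //.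
move: a Ha; apply: ent7; move: b Hb; apply: ent7; cbn [vf gf Xs]; rewrite /mu /= ?mulr1n ?mulr0n; by field.
Qed.

Lemma Bdiag : Bm R = diag_mx (\row_i Num.sqrt (Xs R i)) *m Vm R.
Proof. by apply/matrixP => i j; rewrite mul_diag_mx !mxE. Qed.

Lemma orth7 : orthonormal_basis (Gm R) (Bm R).
Proof.
rewrite /orthonormal_basis.
have -> : Bm R *m Gm R *m (Bm R)^T =
   diag_mx (\row_i Num.sqrt (Xs R i)) *m (Vm R *m Gm R *m (Vm R)^T) *m diag_mx (\row_i Num.sqrt (Xs R i)).
  by rewrite Bdiag trmx_mul tr_diag_mx !mulmxA.
rewrite VGV !mulmx_diag -diag_const_mx; congr diag_mx; apply/rowP => j; rewrite !mxE.
by rewrite mulrAC sqX mulfV // gt_eqF // Xs_gt0.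
Qed.

End Work6.

Theorem mainTheorem12 (R : realType) : einstein_nilradical (@n7 R).
Proof.
split; first exact: lie7.
split; first exact: nil7.
exists (Gm R), (Bm R); split; first by split; [exact: Gsym | exact: Gpos].
split; first exact: orth7.
exists (Ricm R), (cc R), (Dm R); split; first exact: ricci7.
split; first exact: deriv7.
exact: RicE.
Qed.
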